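(* Let $T_2\in\mathbb{R}^{M^2\times M^2}$ be the symmetric positive definite 2-level Toeplitz matrix $T_2=I\otimes T_1+T_1\otimes I$ described in the context, and let $D_2\in\mathbb{R}^{M^2\times M^2}$ be a diagonal matrix with nonnegative diagonal entries, whose maximal diagonal entry is $\lambda_{\max}$. Let $$\mathcal{R}_2=\begin{bmatrix} I & T_2-D_2\\ D_2-T_2 & I\end{bmatrix},\quad \mathcal{T}_2=\begin{bmatrix} 0 & T_2\\ -T_2 & 0\end{bmatrix},\quad \mathcal{D}_2=\begin{bmatrix} I & -D_2\\ D_2 & I\end{bmatrix},$$ let $\omega>0$, and let $\mathcal{F}_{2,\omega}=\frac{1}{2\omega}(\omega I+\mathcal{T}_2)(\omega I+\mathcal{D}_2)$. Then all eigenvalues of $\mathcal{F}_{2,\omega}^{-1}\mathcal{R}_2$ lie in the disk centered at $1$ with radius $$\sigma(\omega)=\sqrt{\frac{(\omega-1)^2+\lambda_{\max}^2}{(\omega+1)^2+\lambda_{\max}^2}}<1.$$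
   Context: Let $1<\alpha\le2$, $M$ a positive integer, $\mathrm{a}<\mathrm{b}$, $h=(\mathrm{b}-\mathrm{a})/(M+1)$, $\Delta t>0$, $\mu=\Delta t/h^{\alpha}$. For $k\in\mathbb{Z}$ let $c_k=\frac{(-1)^k\Gamma(\alpha+1)}{\Gamma(\alpha/2-k+1)\Gamma(\alpha/2+k+1)}$. Let $T_1=\mu T_0\in\mathbb{R}^{M\times M}$ where $T_0$ is the symmetric Toeplitz matrix with entries $[T_0]_{i,j}=c_{i-j}$. $I$ denotes identity matrices of appropriate size, $\otimes$ the Kronecker product. *)

(* Defs.v *)
From HB Require Import structures.
From mathcomp Require Import all_boot all_order all_algebra.
From mathcomp Require Import all_classical all_reals.
From mathcomp Require Import topology normedtype sequences exp.
From mathcomp Require Import complex mxtens.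
Set Implicit Arguments. Unset Strict Implicit. Unset Printing Implicit Defensive.
Import Order.TTheory GRing.Theory Num.Theory.
Import numFieldNormedType.Exports.
Local Open Scope ring_scope.

Section FracDefs.
Variable R : realType.

(* Reciprocal Gamma function 1/Gamma(x), via Gauss' limit formula
   1/Gamma(x) = lim_n x(x+1)...(x+n) / (n! n^x), valid for every real x
   (it is 0 exactly at the poles x = 0,-1,-2,... of Gamma). *)
Definition rGamma (x : R) : R :=
  limn (fun n : nat =>
          (\prod_(i < n.+1) (x + i%:R)) / (n`!%:R * powR n%:R x)).

Definition frac_coef (alpha : R) (k : int) : R :=
  (-1) ^+ `|k|%N * (rGamma (alpha + 1))^-1
  * rGamma (alpha / 2 - k%:~R + 1) * rGamma (alpha / 2 + k%:~R + 1).

Definition meshh (M : nat) (a b : R) : R := (b - a) / (M.+1)%:R.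
Definition mu_ratio (alpha : R) (M : nat) (a b dt : R) : R :=
  dt / powR (meshh M a b) alpha.

Definition T0 (alpha : R) (M : nat) : 'M[R]_M :=
  \matrix_(i < M, j < M) frac_coef alpha (i%:Z - j%:Z).

Definition T1 (alpha : R) (M : nat) (a b dt : R) : 'M[R]_M :=
  mu_ratio alpha M a b dt *: T0 alpha M.

Definition T2 (alpha : R) (M : nat) (a b dt : R) : 'M[R]_(M * M) :=
  (1%:M : 'M[R]_M) *t T1 alpha M a b dt + T1 alpha M a b dt *t (1%:M : 'M[R]_M).

Definition calR2 (n : nat) (T D : 'M[R]_n) : 'M[R]_(n + n) :=
  block_mx 1%:M (T - D) (D - T) 1%:M.
Definition calT2 (n : nat) (T : 'M[R]_n) : 'M[R]_(n + n) :=
  block_mx 0 T (- T) 0.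
Definition calD2 (n : nat) (D : 'M[R]_n) : 'M[R]_(n + n) :=
  block_mx 1%:M (- D) D 1%:M.
Definition calF2 (n : nat) (T D : 'M[R]_n) (omega : R) : 'M[R]_(n + n) :=
  (2 * omega)^-1 *: ((omega%:M + calT2 T) *m (omega%:M + calD2 D)).

Definition sigma_bound (omega lmax : R) : R :=
  Num.sqrt (((omega - 1) ^+ 2 + lmax ^+ 2) / ((omega + 1) ^+ 2 + lmax ^+ 2)).

Definition cplx_mx (m n : nat) (A : 'M[R]_(m, n)) : 'M[R[i]]_(m, n) :=
  map_mx (fun x : R => (x%:C)%C) A.

End FracDefs.

(* Main.v *)
Require Import Defs.
From HB Require Import structures.
From mathcomp Require Import all_boot all_order all_algebra.
From mathcomp Require Import all_classical all_reals.
From mathcomp Require Import topology normedtype sequences exp.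
From mathcomp Require Import complex mxtens.
From mathcomp Require Import ring lra.
Import Order.TTheory GRing.Theory Num.Theory.
Import numFieldNormedType.Exports.
Set Implicit Arguments. Unset Strict Implicit. Unset Printing Implicit Defensive.
Local Open Scope ring_scope.

Lemma cplx_mxE (R : realType) m n (A : 'M[R]_(m, n)) :
  cplx_mx A = map_mx (real_complex R) A.
Proof. by []. Qed.

Definition hq (R : realType) N (u : 'rV[R[i]]_N) : R[i] :=
  (u *m (map_mx (@conjc R) u)^T) 0 0.
Definition qf (R : realType) N (u : 'rV[R[i]]_N) (G : 'M[R]_N) : R[i] :=
  (u *m cplx_mx G *m (map_mx (@conjc R) u)^T) 0 0.

Lemma conj_cplx (R : realType) m n (A : 'M[R]_(m, n)) :
  map_mx (@conjc R) (cplx_mx A) = cplx_mx A.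
Proof. by apply/matrixP => i j; rewrite !mxE conjc_real. Qed.

Lemma hq_mul (R : realType) N (u : 'rV[R[i]]_N) (A : 'M[R]_N) :
  hq (u *m cplx_mx A) = qf u (A *m A^T).
Proof.
rewrite /hq /qf map_mxM conj_cplx trmx_mul !cplx_mxE map_mxM -map_trmx.
by rewrite !mulmxA.
Qed.

Lemma hqE (R : realType) N (u : 'rV[R[i]]_N) :
  hq u = \sum_j u 0 j * (u 0 j)^*%C.
Proof. by rewrite /hq mxE; apply: eq_bigr => j _; rewrite !mxE. Qed.

Lemma hq_ge0 (R : realType) N (u : 'rV[R[i]]_N) : 0 <= hq u.
Proof. by rewrite hqE; apply: sumr_ge0 => j _; apply: mulcJ_ge0. Qed.

Lemma hq_eq0 (R : realType) N (u : 'rV[R[i]]_N) : hq u = 0 -> u = 0.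
Proof.
rewrite hqE => /psumr_eq0P H; apply/matrixP => i j.
rewrite (ord1 i) mxE; have := H (fun k _ => mulcJ_ge0 _) j isT.
by rewrite -sqr_normc => /eqP; rewrite sqrf_eq0 normr_eq0 => /eqP.
Qed.

Lemma hqZ (R : realType) N (u : 'rV[R[i]]_N) (y : R[i]) :
  hq (y *: u) = y * y^*%C * hq u.
Proof.
rewrite !hqE mulr_sumr; apply: eq_bigr => j _; rewrite !mxE rmorphM /=.
by rewrite mulrACA.
Qed.

Lemma qf_scalar (R : realType) N (u : 'rV[R[i]]_N) (c : R) :
  qf u c%:M = (c%:C)%C * hq u.
Proof.
by rewrite /qf cplx_mxE map_scalar_mx mul_mx_scalar -scalemxAl mxE.
Qed.

Lemma qfD (R : realType) N (u : 'rV[R[i]]_N) (G H : 'M[R]_N) :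
  qf u (G + H) = qf u G + qf u H.
Proof. by rewrite /qf cplx_mxE map_mxD mulmxDr mulmxDl mxE. Qed.

Lemma qfB (R : realType) N (u : 'rV[R[i]]_N) (G H : 'M[R]_N) :
  qf u (G - H) = qf u G - qf u H.
Proof.
have e (A B : 'M[R[i]]_(1,1)) : (A - B) 0 0 = A 0 0 - B 0 0 by rewrite !mxE.
by rewrite /qf cplx_mxE map_mxB mulmxBr mulmxBl e.
Qed.

Lemma qfZ (R : realType) N (u : 'rV[R[i]]_N) (a : R) (G : 'M[R]_N) :
  qf u (a *: G) = (a%:C)%C * qf u G.
Proof. by rewrite /qf cplx_mxE map_mxZ -scalemxAr -scalemxAl mxE. Qed.

Lemma qf_diag_ge0 (R : realType) N (u : 'rV[R[i]]_N) (d : 'rV[R]_N) :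
  (forall j, 0 <= d 0 j) -> 0 <= qf u (diag_mx d).
Proof.
move=> d0; rewrite /qf cplx_mxE map_diag_mx mul_mx_diag mxE.
apply: sumr_ge0 => j _; rewrite !mxE mulrAC.
by apply: mulr_ge0; [apply: mulcJ_ge0 | rewrite ler0c].
Qed.

Lemma expand_key (R : realType) N (X Y : 'M[R]_N) (w : R) :
  (w%:M + X) *m (w%:M + Y) - (w%:M - X) *m (w%:M - Y) = (2 * w) *: (X + Y).
Proof.
rewrite !(mulmxDl, mulmxDr, mulNmx, mulmxN, mul_scalar_mx, mul_mx_scalar).
move: (X *m Y) (w%:M : 'M[R]_N) => Z W.
by apply/matrixP => i j; rewrite !mxE; ring.
Qed.

Lemma expand_sq1 (R : realType) N (X : 'M[R]_N) (c : R) :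
  (c%:M + X) *m (c%:M - X) = (c * c) *: 1%:M - X *m X.
Proof.
rewrite !(mulmxDl, mulmxDr, mulNmx, mulmxN, mul_scalar_mx, mul_mx_scalar).
rewrite -[c%:M]scalemx1 -scalerA.
move: (X *m X) (1%:M : 'M[R]_N) => Z W.
by apply/matrixP => i j; rewrite !mxE; ring.
Qed.

Lemma expand_sq2 (R : realType) N (X : 'M[R]_N) (c : R) :
  (c%:M - X) *m (c%:M + X) = (c * c) *: 1%:M - X *m X.
Proof.
rewrite !(mulmxDl, mulmxDr, mulNmx, mulmxN, mul_scalar_mx, mul_mx_scalar).
rewrite -[c%:M]scalemx1 -scalerA.
move: (X *m X) (1%:M : 'M[R]_N) => Z W.
by apply/matrixP => i j; rewrite !mxE; ring.
Qed.

Definition Smx (R : realType) n (d : 'rV[R]_n) : 'M[R]_(n + n) :=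
  block_mx 0 (- diag_mx d) (diag_mx d) 0.

Lemma calD2E (R : realType) n (d : 'rV[R]_n) :
  calD2 (diag_mx d) = 1%:M + Smx d.
Proof. by rewrite /calD2 /Smx (scalar_mx_block n n 1) add_block_mx !addr0 !add0r. Qed.

Lemma trSmx (R : realType) n (d : 'rV[R]_n) : (Smx d)^T = - Smx d.
Proof.
by rewrite /Smx tr_block_mx !trmx0 linearN /= tr_diag_mx opp_block_mx !oppr0 opprK.
Qed.

Lemma SmxM (R : realType) n (d : 'rV[R]_n) :
  Smx d *m Smx d = - diag_mx (row_mx (\row_j (d 0 j * d 0 j)) (\row_j (d 0 j * d 0 j))).
Proof.
rewrite /Smx mulmx_block !mul0mx !mulmx0 mulNmx mulmxN !add0r !addr0 mulmx_diag.
by rewrite diag_mx_row opp_block_mx oppr0.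
Qed.

Lemma trT2 (R : realType) n (T : 'M[R]_n) : T^T = T -> (calT2 T)^T = - calT2 T.
Proof.
by move=> sT; rewrite /calT2 tr_block_mx !trmx0 linearN /= sT opp_block_mx !oppr0 opprK.
Qed.

Lemma calR2E (R : realType) n (T D : 'M[R]_n) : calR2 T D = calT2 T + calD2 D.
Proof. by rewrite /calR2 /calT2 /calD2 add_block_mx !add0r addrC [- T + D]addrC. Qed.

Lemma scal_shift1 (R : realType) N (S : 'M[R]_N) (w c : R) :
  w%:M + (c%:M + S) = (w + c)%:M + S.
Proof. by apply/matrixP => i j; rewrite !mxE; case: (i == j); rewrite ?mulr1n ?mulr0n; ring. Qed.

Lemma scal_shift2 (R : realType) N (S : 'M[R]_N) (w c : R) :
  w%:M - (c%:M + S) = (w - c)%:M - S.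
Proof. by apply/matrixP => i j; rewrite !mxE; case: (i == j); rewrite ?mulr1n ?mulr0n; ring. Qed.

Lemma fc_sym (R : realType) (alpha : R) (k : int) :
  frac_coef alpha (- k) = frac_coef alpha k.
Proof.
rewrite /frac_coef abszN mulrNz opprK.
by rewrite -!mulrA; congr (_ * (_ * _)); rewrite mulrC.
Qed.

Lemma T2_sym (R : realType) (alpha : R) M (a b dt : R) :
  (T2 alpha M a b dt)^T = T2 alpha M a b dt.
Proof.
have T0s : (T0 alpha M)^T = T0 alpha M.
  by apply/matrixP => i j; rewrite !mxE -opprB fc_sym.
have T1s : (T1 alpha M a b dt)^T = T1 alpha M a b dt.
  by rewrite /T1 linearZ /= T0s.
by rewrite /T2 linearD /= !trmx_tens trmx1 T1s.
Qed.

Lemma bigmax_ge (R : realType) n (F : 'I_n -> R) i :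
  F i <= \big[Num.max/0]_(j < n) F j.
Proof.
have : i \in index_enum 'I_n by rewrite mem_index_enum.
elim: (index_enum _) => [//|x s IH]; rewrite in_cons big_cons le_max.
by case/orP => [/eqP->|/IH->]; rewrite ?lexx ?orbT.
Qed.

Lemma bigmax_ge0 (R : realType) n (F : 'I_n -> R) :
  0 <= \big[Num.max/0]_(j < n) F j.
Proof.
elim: (index_enum _) => [|x s IH]; first by rewrite big_nil.
by rewrite big_cons le_max IH orbT.
Qed.

Lemma scal_ineq (R : realType) (w l d : R) : 0 < w -> 0 <= d -> d <= l ->
  0 <= ((w - 1) ^+ 2 + l ^+ 2) / ((w + 1) ^+ 2 + l ^+ 2) * ((w + 1) ^+ 2 + d * d)
       - ((w - 1) ^+ 2 + d * d).
Proof.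
move=> w0 d0 dl.
have Z0 : 0 < (w + 1) ^+ 2 + l ^+ 2 by nra.
have -> : ((w - 1) ^+ 2 + l ^+ 2) / ((w + 1) ^+ 2 + l ^+ 2) * ((w + 1) ^+ 2 + d * d)
       - ((w - 1) ^+ 2 + d * d) = (4 * w * (l ^+ 2 - d * d)) / ((w + 1) ^+ 2 + l ^+ 2).
  by field; rewrite gt_eqF.
apply: divr_ge0; last exact: ltW.
apply: mulr_ge0; first lra.
by rewrite subr_ge0 expr2 ler_pM.
Qed.

Lemma unit_lb (R : realType) N (A G : 'M[R]_N) (c : R) :
  0 < c -> A *m A^T = c *: 1%:M + G -> (forall u, 0 <= qf u G) ->
  cplx_mx A \in unitmx.
Proof.
move=> c0 eA Gge; rewrite -row_free_unit; apply: inj_row_free => v hv.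
have : hq (v *m cplx_mx A) = 0 by rewrite hv hqE big1 // => j _; rewrite mxE mul0r.
rewrite hq_mul eA qfD scalemx1 qf_scalar => /eqP.
rewrite paddr_eq0; last exact: Gge.
  by case/andP; rewrite mulf_eq0 fmorph_eq0 (gt_eqF c0) /= => /eqP/hq_eq0.
by apply: mulr_ge0; [rewrite ler0c ltW | exact: hq_ge0].
Qed.

Theorem theorem2 (R : realType) (alpha : R) (M : nat) (a b dt : R)
  (D2 : 'M[R]_(M * M)) (omega : R) :
  1 < alpha -> alpha <= 2 -> (0 < M)%N -> a < b -> 0 < dt ->
  is_diag_mx D2 -> (forall i, 0 <= D2 i i) ->
  0 < omega ->
  let lmax := \big[Num.max/0]_(i < M * M) D2 i i in
  let Tm := T2 alpha M a b dt in
  let F := calF2 Tm D2 omega in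
  let sigma := sigma_bound omega lmax in
  (forall z : R[i],
     eigenvalue (cplx_mx (invmx F *m calR2 Tm D2)) z ->
     `|z - 1| <= (sigma%:C)%C)
  /\ sigma < 1.
Proof.
move=> _ _ _ _ _ Ddiag Dge0 w0 lmax Tm F sigma.
set n := (M * M)%N.
have [d Dd] := diag_mxP _ Ddiag.
have dge0 : forall j, 0 <= d 0 j.
  by move=> j; have := Dge0 j; rewrite Dd mxE eqxx mulr1n.
have dle : forall j, d 0 j <= lmax.
  by move=> j; have := bigmax_ge (fun i => D2 i i) j; rewrite /lmax Dd mxE eqxx mulr1n.
have l0 : 0 <= lmax by apply: bigmax_ge0.
set q := ((omega - 1) ^+ 2 + lmax ^+ 2) / ((omega + 1) ^+ 2 + lmax ^+ 2).
have Z0 : 0 < (omega + 1) ^+ 2 + lmax ^+ 2 by nra.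
have q0 : 0 <= q by apply: divr_ge0; [apply: addr_ge0; apply: sqr_ge0 | exact: ltW].
have q1 : q < 1.
  by rewrite /q ltr_pdivrMr // mul1r ltrD2r; nra.
have sq : sigma ^+ 2 = q by rewrite /sigma /sigma_bound sqr_sqrtr.
have s0 : 0 <= sigma by apply: sqrtr_ge0.
split; last by rewrite /sigma /sigma_bound -[X in _ < X]sqrtr1 ltr_sqrt ?ltr01.
move=> z /eigenvalueP [v vE vn0].
set Tb := calT2 Tm.
set S := Smx d.
have TbT : Tb^T = - Tb by apply: trT2; apply: T2_sym.
have STT : S^T = - S by apply: trSmx.
set P := omega%:M + Tb.
set P' := omega%:M - Tb.
set Q := (omega + 1)%:M + S.
set Q' := (omega - 1)%:M - S.
have QE : omega%:M + calD2 D2 = Q by rewrite Dd calD2E scal_shift1.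
have Q'E : omega%:M - calD2 D2 = Q' by rewrite Dd calD2E scal_shift2.
set f := row_mx (\row_j (d 0 j * d 0 j)) (\row_j (d 0 j * d 0 j)).
have fge0 : forall j, 0 <= f 0 j.
  move=> j; rewrite /f mxE; case: (fintype.split j) => k; rewrite mxE; exact: mulr_ge0.
have PPT : P *m P^T = (omega * omega) *: 1%:M + Tb *m Tb^T.
  by rewrite linearD /= tr_scalar_mx TbT expand_sq1 mulmxN.
have P'PT : P' *m P'^T = (omega * omega) *: 1%:M + Tb *m Tb^T.
  by rewrite linearB /= tr_scalar_mx TbT opprK expand_sq2 mulmxN.
have QQT : Q *m Q^T = ((omega + 1) * (omega + 1)) *: 1%:M + diag_mx f.
  by rewrite linearD /= tr_scalar_mx STT expand_sq1 SmxM opprK.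
have Q'QT : Q' *m Q'^T = ((omega - 1) * (omega - 1)) *: 1%:M + diag_mx f.
  by rewrite linearB /= tr_scalar_mx STT opprK expand_sq2 SmxM opprK.
have QQc : Q *m Q' = Q' *m Q.
  by rewrite -QE -Q'E expand_sq1 expand_sq2.
have keyR : P *m Q - P' *m Q' = (2 * omega) *: calR2 Tm D2.
  by rewrite -QE -Q'E expand_key calR2E.
have Pu : cplx_mx P \in unitmx.
  apply: (@unit_lb _ _ _ (Tb *m Tb^T) (omega * omega)) => //; first exact: mulr_gt0.
  by move=> u; rewrite -hq_mul; apply: hq_ge0.
have Qu : cplx_mx Q \in unitmx.
  apply: (@unit_lb _ _ _ (diag_mx f) ((omega + 1) * (omega + 1))) => //.
    by apply: mulr_gt0; lra.
  by move=> u; apply: qf_diag_ge0.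
have w2 : (2 * omega)%:C%C != 0 by rewrite fmorph_eq0 mulf_neq0 // ?gt_eqF //; lra.
have cFE : cplx_mx F = ((2 * omega)^-1)%:C%C *: (cplx_mx P *m cplx_mx Q).
  by rewrite /F /calF2 QE !cplx_mxE map_mxZ map_mxM.
have Fu : cplx_mx F \in unitmx.
  by rewrite cFE unitmxZ ?unitmx_mul ?Pu ?Qu // unitfE fmorph_eq0 invr_eq0 -(fmorph_eq0 (real_complex R)).
have cAE : cplx_mx (invmx F *m calR2 Tm D2) = invmx (cplx_mx F) *m cplx_mx (calR2 Tm D2).
  by rewrite !cplx_mxE map_mxM map_invmx.
rewrite cAE in vE.
set w := v *m invmx (cplx_mx F).
have vw : v = w *m cplx_mx F by rewrite /w mulmxKV.
have wR : w *m cplx_mx (calR2 Tm D2) = z *: (w *m cplx_mx F).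
  by rewrite /w -mulmxA vE -vw.
have keyC : cplx_mx P *m cplx_mx Q - cplx_mx P' *m cplx_mx Q'
    = (2 * omega)%:C%C *: cplx_mx (calR2 Tm D2).
  by rewrite !cplx_mxE -!map_mxM -map_mxB keyR map_mxZ.
set y := 1 - z.
have h1 : w *m cplx_mx P' *m cplx_mx Q' = y *: (w *m cplx_mx P *m cplx_mx Q).
  have h0 : w *m (cplx_mx P *m cplx_mx Q) - w *m (cplx_mx P' *m cplx_mx Q')
      = z *: (w *m (cplx_mx P *m cplx_mx Q)).
    rewrite -mulmxBr keyC -scalemxAr wR cFE -scalemxAr !scalerA.
    congr (_ *: _); rewrite mulrAC -rmorphM /= mulfV ?mulr1 //.
      by rewrite rmorph1 mul1r.
    by rewrite mulf_neq0 // ?gt_eqF //; lra.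
  by rewrite -[w *m _ *m cplx_mx Q']mulmxA -[w *m _ *m cplx_mx Q]mulmxA /y scalerBl scale1r -h0 opprB addrC subrK.
set a' := w *m cplx_mx P'.
set b' := w *m cplx_mx P.
set u := a' *m invmx (cplx_mx Q).
have au : a' = u *m cplx_mx Q by rewrite /u mulmxKV.
have hu : u *m cplx_mx Q' = y *: b'.
  have QQC : cplx_mx Q *m cplx_mx Q' = cplx_mx Q' *m cplx_mx Q.
    by rewrite !cplx_mxE -!map_mxM QQc.
  have : u *m cplx_mx Q' *m cplx_mx Q = (y *: b') *m cplx_mx Q.
    by rewrite -mulmxA -QQC mulmxA -au h1 scalemxAl.
  move=> /(congr1 (fun X => X *m invmx (cplx_mx Q))).
  by rewrite !mulmxK.
have hab : hq a' = hq b'.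
  by rewrite /a' /b' !hq_mul PPT P'PT.
have bn0 : b' != 0.
  apply/eqP => b0; move/eqP: vn0; apply.
  have : w = b' *m invmx (cplx_mx P) by rewrite /b' mulmxK.
  by rewrite b0 mul0mx vw => ->; rewrite mul0mx.
have hb0 : 0 < hq b'.
  rewrite lt_def hq_ge0 andbT; apply/eqP => /hq_eq0 /eqP; exact/negP.
have ineq : 0 <= (q%:C)%C * hq (u *m cplx_mx Q) - hq (u *m cplx_mx Q').
  rewrite !hq_mul -qfZ -qfB QQT Q'QT.
  set g := \row_k (q * ((omega + 1) * (omega + 1) + f 0 k) - ((omega - 1) * (omega - 1) + f 0 k)).
  have -> : q *: ((omega + 1) * (omega + 1) *: 1%:M + diag_mx f)
      - ((omega - 1) * (omega - 1) *: 1%:M + diag_mx f) = diag_mx g.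
    apply/matrixP => i j; rewrite !mxE; case: (i == j); rewrite ?mulr1n ?mulr0n; ring.
  apply: qf_diag_ge0 => k; rewrite mxE.
  have := fge0 k; rewrite /f mxE; case: (fintype.split k) => k'; rewrite mxE => _;
    rewrite -!expr2; apply: scal_ineq => //.
rewrite hu -au hab hqZ subr_ge0 in ineq.
have yy : y * y^*%C <= (q%:C)%C by rewrite -(ler_pM2r hb0).
rewrite distrC -/y.
rewrite -(@ler_pXn2r _ 2) // ?inE ?normr_ge0 ?ler0c //; last first.
  by rewrite qualifE /= ler0c.
by rewrite sqr_normc -rmorphXn /= sq.
Qed.
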